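(* For integers $n\ge 1$ let $\mu=\mu(n)=\frac{\pi}{6}\sqrt{24n-1}$ and \[ T(n)=\frac{\sqrt{12}}{24n-1}\left[\left(1-\frac{1}{\mu}\right)e^{\mu}+\frac{(-1)^n}{\sqrt2}e^{\mu/2}\right]. \] Let $T_1(n)=2\log T(n)-\log T(n-1)-\log T(n+1)$ and $C=\pi\sqrt{2/3}$. Then for all integers $n\ge 50$, \[ \frac{24\pi}{(24(n+1)-1)^{3/2}}-\frac{3}{n^2} < T_1(n) < \frac{24\pi}{(24(n-1)-1)^{3/2}}+e^{-C\sqrt n/10}. \]
   Context: $\log$ denotes the natural logarithm. *)

(* Defs.v *)
From Stdlib Require Import Reals.
Open Scope R_scope.

Definition mu (n : nat) : R := PI / 6 * sqrt (24 * INR n - 1).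

Definition T (n : nat) : R :=
  sqrt 12 / (24 * INR n - 1) *
  ((1 - 1 / mu n) * exp (mu n) + (-1) ^ n / sqrt 2 * exp (mu n / 2)).

Definition T1 (n : nat) : R := 2 * ln (T n) - ln (T (n - 1)) - ln (T (n + 1)).

Definition Cconst : R := PI * sqrt (2 / 3).

(* Main.v *)
Require Import Defs.
From Stdlib Require Import Reals Lra Psatz Machin.
Open Scope R_scope.

Lemma PI_lb : 3.14 < PI.
Proof.
destruct (PI_2_3_7_ineq 1) as [H _].
unfold tg_alt, PI_2_3_7_tg, Ratan_seq in H. simpl in H.
lra.
Qed.

Lemma exp_taylor4 x : 0 <= x -> 1 + x + x^2/2 + x^3/6 + x^4/24 <= exp x.
Proof.
intro Hx. unfold exp. destruct (exist_exp x) as [l Hl]. simpl.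
assert (H := sum_incr (fun i => / INR (Factorial.fact i) * x ^ i) 4 l Hl).
simpl in H.
assert (forall n:nat, 0 <= / INR (Factorial.fact n) * x ^ n).
{ intros; apply Rmult_le_pos; [left; apply Rinv_0_lt_compat, lt_0_INR, Factorial.lt_O_fact| apply pow_le; lra]. }
specialize (H H0). simpl in H. lra.
Qed.

Lemma ln_div' x y : 0 < x -> 0 < y -> ln (x / y) = ln x - ln y.
Proof. intros. unfold Rdiv. rewrite ln_mult, ln_Rinv; try lra. apply Rinv_0_lt_compat; lra. Qed.

Lemma ln_diff_bounds X Y : 0 < X -> 0 < Y -> 1 - Y / X <= ln X - ln Y <= X / Y - 1.
Proof.
intros HX HY.
assert (H1 := exp_ineq1_le (ln (X / Y))).
assert (H2 := exp_ineq1_le (ln (Y / X))).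
rewrite exp_ln in H1 by (apply Rdiv_lt_0_compat; lra).
rewrite exp_ln in H2 by (apply Rdiv_lt_0_compat; lra).
rewrite ln_div' in H1, H2 by lra. lra.
Qed.

Definition uu (k : nat) : R := 1 - 1 / mu k + (-1) ^ k / sqrt 2 * exp (- (mu k / 2)).

Lemma lnT k : 0 < 24 * INR k - 1 -> 0 < uu k ->
  ln (T k) = ln (sqrt 12) - ln (24 * INR k - 1) + mu k + ln (uu k).
Proof.
intros Ha Hu.
assert (E : T k = sqrt 12 / (24 * INR k - 1) * (exp (mu k) * uu k)).
{ unfold T, uu.
  replace (exp (mu k / 2)) with (exp (mu k) * exp (- (mu k / 2))).
  2:{ rewrite <- exp_plus. f_equal. field. }
  ring. }
assert (Hs : 0 < sqrt 12) by (apply sqrt_lt_R0; lra).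
assert (0 < exp (mu k)) by apply exp_pos.
rewrite E, ln_mult, ln_mult, ln_exp, ln_div'; try lra.
- apply Rdiv_lt_0_compat; lra.
- apply Rmult_lt_0_compat; lra.
Qed.

Lemma div_le a b c d : 0 < b -> 0 < d -> a * d <= c * b -> a / b <= c / d.
Proof.
intros. apply Rmult_le_reg_r with (b * d). nra.
replace (a / b * (b * d)) with (a * d) by (field; lra).
replace (c / d * (b * d)) with (c * b) by (field; lra). lra.
Qed.

Ltac mono := repeat (first [lra | apply Rmult_le_compat | apply Rmult_le_pos]).

Section S.
Variables p q r : R.
Hypothesis Hp : 0 < p.
Hypothesis Hq : 0 < q.
Hypothesis Hr : 0 < r.
Hypothesis Eq : q * q = p * p + 24.
Hypothesis Er : r * r = p * p + 48.

Lemma qp : q - p = 24 / (p + q).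
Proof. field_simplify_eq; nra. Qed.
Lemma rq : r - q = 24 / (q + r).
Proof. field_simplify_eq; nra. Qed.
Lemma rp : r - p = 48 / (p + r).
Proof. field_simplify_eq; nra. Qed.

Lemma pq_le : p <= q. Proof. nra. Qed.
Lemma qr_le : q <= r. Proof. nra. Qed.

Lemma secdiff : 2 * q - p - r = 1152 / ((p + q) * (q + r) * (p + r)).
Proof.
replace (2*q - p - r) with ((q - p) - (r - q)) by ring.
rewrite qp, rq.
assert (H: r - p = 48 / (p + r)) by apply rp.
replace (24 / (p + q) - 24 / (q + r)) with (24 * (r - p) / ((p + q) * (q + r))) by (field; lra).
rewrite H. field. repeat split; lra.
Qed.

Lemma A_bounds : 144 / (r * r * r) <= 2 * q - p - r <= 144 / (p * p * p).
Proof.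
rewrite secdiff. assert (H1 := pq_le). assert (H2 := qr_le).
split; apply div_le; try (repeat apply Rmult_lt_0_compat; lra).
- assert ((p + q) * (q + r) * (p + r) <= (2*r)*(2*r)*(2*r)).
  { mono. }
  lra.
- assert ((2*p)*(2*p)*(2*p) <= (p + q) * (q + r) * (p + r)).
  { mono. }
  lra.
Qed.

Lemma conv_bounds : 0 <= 1/p + 1/r - 2/q <= 576 / (p*p*p*p*p).
Proof.
assert (H1 := pq_le). assert (H2 := qr_le).
assert (E : 1/p + 1/r - 2/q = 24 * (q * (r - p) + 48) / (p*q*r*(p+q)*(q+r))).
{ replace (1/p + 1/r - 2/q) with ((q - p)/(p*q) - (r - q)/(q*r)) by (field; lra).
  rewrite qp, rq. field_simplify_eq; try (repeat split; lra). }
rewrite E. rewrite rp.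
assert (0 <= q * (48 / (p + r))).
{ apply Rmult_le_pos; [lra| apply Rlt_le, Rdiv_lt_0_compat; lra]. }
split.
- apply Rlt_le, Rdiv_lt_0_compat; [lra| repeat apply Rmult_lt_0_compat; lra].
- assert (q * (48 / (p + r)) <= 48).
  { apply Rmult_le_reg_r with (p + r); [lra|]. field_simplify; nra. }
  apply div_le; try (repeat apply Rmult_lt_0_compat; lra).
  assert (p*p*p*(2*p)*(2*p) <= p*q*r*(p+q)*(q+r)).
  { mono. }
  assert (0 < p*p*p*p*p) by (repeat apply Rmult_lt_0_compat; lra).
  nra.
Qed.

Lemma pr_bounds : p * r <= q * q /\ q * q - p * r <= 576 / (q * q).
Proof.
assert (H1 := pq_le). assert (H2 := qr_le).
assert (E : (q*q - p*r) * (q*q + p*r) = 576) by nra.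
assert (0 < p*r) by nra.
split.
- nra.
- apply Rmult_le_reg_r with (q*q); [nra|]. field_simplify; try nra.
Qed.

End S.

Lemma exp_pow_compat x k : exp x ^ k = exp (INR k * x).
Proof.
induction k.
- simpl. rewrite Rmult_0_l, exp_0. reflexivity.
- rewrite S_INR, <- tech_pow_Rmult, IHk, <- exp_plus. f_equal. ring.
Qed.

Lemma exp_y4 y : 8.5 <= y -> 0.93 * y^4 <= exp y.
Proof.
intro Hy.
assert (H1 := exp_taylor4 (1/2)).
assert (E1 : exp 8.5 = exp (1/2) ^ 17).
{ rewrite exp_pow_compat; f_equal. simpl; lra. }
assert (Hc : 4870 <= (1.6484)^17) by (simpl; nra).
assert (H2 : 4870 <= exp 8.5).
{ rewrite E1. apply Rle_trans with (1 := Hc). apply pow_incr. simpl in H1. lra. }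
set (t := (y - 8.5) / 4).
assert (E2 : exp y = exp 8.5 * exp t ^ 4).
{ rewrite exp_pow_compat, <- exp_plus. f_equal. unfold t. simpl. field. }
assert (H3 : y / 8.5 <= exp t).
{ assert (H := exp_ineq1_le t). unfold t in *. lra. }
assert (H4 : (y/8.5)^4 <= exp t ^ 4) by (apply pow_incr; lra).
rewrite E2.
assert (0 <= (y/8.5)^4) by (apply pow_le; lra).
replace (y^4) with (8.5^4 * (y/8.5)^4) by (simpl; field; lra).
assert (0 <= exp t ^ 4) by (apply pow_le; left; apply exp_pos).
simpl (8.5^4). nra.
Qed.

Lemma exp_le x y : x <= y -> exp x <= exp y.
Proof. intro H. destruct (Rle_lt_or_eq_dec _ _ H) as [H'|H']. left; apply exp_increasing; auto. subst; lra. Qed.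

Lemma eps_bound k m0 : m0 <= mu k ->
  Rabs ((-1) ^ k / sqrt 2 * exp (- (mu k / 2))) <= 0.71 * exp (- (m0 / 2)).
Proof.
intro H.
assert (Hs : 1.41 <= sqrt 2).
{ rewrite <- (sqrt_pow2 1.41) by lra. apply sqrt_le_1_alt. simpl; lra. }
unfold Rdiv. rewrite !Rabs_mult, pow_1_abs, Rabs_inv, (Rabs_pos_eq (sqrt 2)) by lra.
rewrite (Rabs_pos_eq (exp _)) by (left; apply exp_pos).
assert (/ sqrt 2 <= 0.71).
{ apply Rmult_le_reg_r with (sqrt 2); [lra|]. rewrite Rinv_l by lra. lra. }
assert (exp (- (mu k * / 2)) <= exp (- (m0 * / 2))) by (apply exp_le; lra).
assert (0 < exp (- (mu k * / 2))) by apply exp_pos.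
assert (0 < / sqrt 2) by (apply Rinv_0_lt_compat; lra).
nra.
Qed.

Lemma Rabs_le_inv a b : Rabs a <= b -> -b <= a <= b.
Proof.
intro H. split.
- assert (-a <= Rabs a) by (rewrite <- Rabs_Ropp; apply RRle_abs). lra.
- apply Rle_trans with (Rabs a); [apply RRle_abs|auto].
Qed.

Lemma sq_ge s c : 0 <= s -> 0 <= c -> c*c <= s*s -> c <= s.
Proof. intros. nra. Qed.

Lemma prod_bound v e D : 0 <= v <= 1 -> -D <= e <= D -> -D <= v*e <= D.
Proof. intros. split; nra. Qed.

Lemma prod_bound2 e f D : -D <= e <= D -> -D <= f <= D -> -(D*D) <= e*f <= D*D.
Proof. intros. split; nra. Qed.

Lemma frac_lower W U M : 0.88 <= U -> -M <= W -> 0 <= M -> -M/0.88 <= W/U.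
Proof.
intros. apply Rle_trans with (-M/U).
- unfold Rdiv. rewrite !Ropp_mult_distr_l_reverse. apply Ropp_le_contravar.
  apply Rmult_le_compat_l; [lra|]. apply Rinv_le_contravar; lra.
- unfold Rdiv. apply Rmult_le_compat_r; [left; apply Rinv_0_lt_compat; lra| lra].
Qed.

Lemma frac_upper W U M : 0.88 <= U -> W <= M -> 0 <= M -> W/U <= M/0.88.
Proof.
intros. apply Rle_trans with (M/U).
- unfold Rdiv. apply Rmult_le_compat_r; [left; apply Rinv_0_lt_compat; lra| lra].
- unfold Rdiv. apply Rmult_le_compat_l; [lra|]. apply Rinv_le_contravar; lra.
Qed.

Lemma Rpower32 z : 0 < z -> Rpower z (3/2) = z * sqrt z.
Proof.
intro. replace (3/2) with (1 + /2) by field. rewrite Rpower_plus, Rpower_1, Rpower_sqrt; auto.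
Qed.

Theorem lemma2p2 : forall n : nat, (50 <= n)%nat ->
  24 * PI / Rpower (24 * (INR n + 1) - 1) (3 / 2) - 3 / INR n ^ 2 < T1 n /\
  T1 n < 24 * PI / Rpower (24 * (INR n - 1) - 1) (3 / 2)
         + exp (- (Cconst * sqrt (INR n) / 10)).
Proof.
intros n Hn.
assert (Hx : 50 <= INR n) by (apply le_INR in Hn; simpl in Hn; lra).
assert (Em : INR (n - 1) = INR n - 1) by (rewrite minus_INR by lia; simpl; ring).
assert (Ep : INR (n + 1) = INR n + 1) by (rewrite plus_INR; simpl; ring).
set (x := INR n) in *.
set (a := 24 * x - 1).
assert (Ham : 24 * INR (n - 1) - 1 = a - 24) by (rewrite Em; unfold a; ring).
assert (Hap : 24 * INR (n + 1) - 1 = a + 24) by (rewrite Ep; unfold a; ring).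
set (p := sqrt (a - 24)). set (q := sqrt a). set (r := sqrt (a + 24)).
assert (Pp : p * p = a - 24) by (apply sqrt_sqrt; unfold a; lra).
assert (Pq : q * q = a) by (apply sqrt_sqrt; unfold a; lra).
assert (Pr : r * r = a + 24) by (apply sqrt_sqrt; unfold a; lra).
assert (p0 : 0 <= p) by apply sqrt_pos.
assert (q0 : 0 <= q) by apply sqrt_pos.
assert (r0 : 0 <= r) by apply sqrt_pos.
assert (p1 : 34.27 <= p) by (unfold a in Pp; nra).
assert (Eq : q * q = p * p + 24) by lra.
assert (Er : r * r = p * p + 48) by lra.
assert (pq : p <= q) by nra.
assert (qr : q <= r) by nra.
assert (Mm : mu (n - 1) = PI / 6 * p) by (unfold mu; rewrite Ham; reflexivity).
assert (M0 : mu n = PI / 6 * q) by reflexivity.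
assert (Mp : mu (n + 1) = PI / 6 * r) by (unfold mu; rewrite Hap; reflexivity).
assert (Hpi := PI_lb). assert (Hpi4 := PI_4).
set (y := PI / 6 * p / 2).
set (Ey := exp (- y)).
set (D := 0.71 * Ey).
set (em := (-1) ^ (n - 1) / sqrt 2 * exp (- (mu (n - 1) / 2))).
set (e0 := (-1) ^ n / sqrt 2 * exp (- (mu n / 2))).
set (ep := (-1) ^ (n + 1) / sqrt 2 * exp (- (mu (n + 1) / 2))).
assert (Bm : Rabs em <= D) by (apply eps_bound; lra).
assert (B0 : Rabs e0 <= D) by (apply eps_bound; rewrite M0; nra).
assert (Bp : Rabs ep <= D) by (apply eps_bound; rewrite Mp; nra).
apply Rabs_le_inv in Bm. apply Rabs_le_inv in B0. apply Rabs_le_inv in Bp.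
assert (Hy : 8.5 <= y) by (unfold y; nra).
assert (Hexp := exp_y4 y Hy).
assert (Hy2 : 0.0684 * (24 * x - 25) <= y * y).
{ unfold y. assert (PI * PI >= 3.14 * 3.14) by nra.
  replace (PI / 6 * p / 2 * (PI / 6 * p / 2)) with (PI * PI * (p * p) / 144) by field.
  rewrite Pp. unfold a. nra. }
assert (Hy4 : 2.58 * (x * x) <= y ^ 4).
{ replace (y^4) with ((y*y)*(y*y)) by ring. nra. }
assert (HEy : Ey * exp y = 1) by (unfold Ey; rewrite <- exp_plus; replace (-y + y) with 0 by ring; apply exp_0).
assert (Ey0 : 0 < Ey) by apply exp_pos.
assert (HEy2 : 2.39 * (x * x) * Ey <= 1) by nra.
set (k := 6 / PI).
assert (kPI : k * PI = 6) by (unfold k; field; lra).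
assert (k1 : k <= 1.911) by nra.
assert (k0 : 1.5 <= k) by nra.
set (vm := 1 - k / p). set (v0 := 1 - k / q). set (vp := 1 - k / r).
assert (Vm : 0.944 <= vm <= 1).
{ unfold vm. assert (0 < k / p) by (apply Rdiv_lt_0_compat; lra).
  assert (k / p <= 0.056) by (apply Rmult_le_reg_r with p; [lra|]; unfold Rdiv; rewrite Rmult_assoc, Rinv_l by lra; nra). lra. }
assert (V0 : 0.944 <= v0 <= 1).
{ unfold v0. assert (0 < k / q) by (apply Rdiv_lt_0_compat; lra).
  assert (k / q <= 0.056) by (apply Rmult_le_reg_r with q; [lra|]; unfold Rdiv; rewrite Rmult_assoc, Rinv_l by lra; nra). lra. }
assert (Vp : 0.944 <= vp <= 1).
{ unfold vp. assert (0 < k / r) by (apply Rdiv_lt_0_compat; lra).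
  assert (k / r <= 0.056) by (apply Rmult_le_reg_r with r; [lra|]; unfold Rdiv; rewrite Rmult_assoc, Rinv_l by lra; nra). lra. }
assert (HD : D * (x * x) <= 0.2971) by (unfold D; nra).
assert (HD2 : D <= 0.000119) by nra.
assert (D0 : 0 < D) by (unfold D; lra).
assert (Um : uu (n - 1) = vm + em).
{ unfold uu, vm. fold em. rewrite Mm. unfold k. field. lra. }
assert (U0 : uu n = v0 + e0).
{ unfold uu, v0. fold e0. rewrite M0. unfold k. field. lra. }
assert (Up : uu (n + 1) = vp + ep).
{ unfold uu, vp. fold ep. rewrite Mp. unfold k. field. lra. }
set (um := vm + em) in *. set (u0 := v0 + e0) in *. set (up := vp + ep) in *.
assert (um0 : 0.94 <= um) by (unfold um; lra).
assert (u00 : 0.94 <= u0) by (unfold u0; lra).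
assert (up0 : 0.94 <= up) by (unfold up; lra).
assert (HT : T1 n = PI/6*(2*q - p - r) + (ln((a-24)*(a+24)) - ln(a*a)) + (ln(u0*u0) - ln(um*up))).
{ unfold T1. rewrite (lnT (n-1)), (lnT n), (lnT (n+1)); try lra.
  rewrite Ham, Hap, Mm, M0, Mp, Um, U0, Up. fold a.
  rewrite !ln_mult; try lra; change (24 * INR n - 1) with a; try lra. all: change (INR n) with x; lra. }
assert (R1 : Rpower (24*(x+1)-1) (3/2) = r*r*r).
{ replace (24*(x+1)-1) with (a+24) by (unfold a; ring). rewrite Rpower32 by (unfold a; lra). fold r. rewrite <- Pr. ring. }
assert (R2 : Rpower (24*(x-1)-1) (3/2) = p*p*p).
{ replace (24*(x-1)-1) with (a-24) by (unfold a; ring). rewrite Rpower32 by (unfold a; lra). fold p. rewrite <- Pp. ring. }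
rewrite R1, R2, HT.
assert (p0' : 0 < p) by lra. assert (q0' : 0 < q) by lra. assert (r0' : 0 < r) by lra.
destruct (A_bounds p q r p0' q0' r0' Eq Er) as [A1 A2].
destruct (conv_bounds p q r p0' q0' r0' Eq Er) as [C1 C2].
destruct (pr_bounds p q r p0' q0' r0' Eq Er) as [P1 P2].
assert (a0 : 1175 <= a - 24) by (unfold a; lra).
destruct (ln_diff_bounds ((a-24)*(a+24)) (a*a)) as [LB1 LB2]; try nra.
destruct (ln_diff_bounds (u0*u0) (um*up)) as [LC1 LC2]; try nra.
assert (EB1 : a*a/((a-24)*(a+24)) = 1 + 576/((a-24)*(a+24))) by (field; lra).
assert (EB2 : (a-24)*(a+24)/(a*a) = 1 - 576/(a*a)) by (field; lra).
assert (x0 : 0 < x * x) by nra.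
assert (B1 : 576/((a-24)*(a+24)) <= 1.01/(x*x)).
{ apply div_le; try nra; unfold a; nra. }
assert (EX : v0*v0 - vm*vp = k*(1/p + 1/r - 2/q) + k*k*(1/(q*q) - 1/(p*r))).
{ unfold v0, vm, vp. field. lra. }
assert (Q1 : 1/(q*q) - 1/(p*r) <= 0).
{ assert (0 < p*r) by nra. apply Rle_minus. apply div_le; nra. }
assert (Q2 : - (576 / (p*p*p*p*p*p)) <= 1/(q*q) - 1/(p*r)).
{ assert (0 < p*r) by nra.
  assert (E1 : 1/(q*q) - 1/(p*r) = - ((q*q - p*r)/(q*q*(p*r)))) by (field; lra).
  rewrite E1. apply Ropp_le_contravar.
  apply div_le; [nra | repeat apply Rmult_lt_0_compat; lra | ].
  assert ((q*q - p*r) * (q*q) <= 576).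
  { apply Rmult_le_reg_r with (/(q*q)). apply Rinv_0_lt_compat; nra.
    rewrite Rmult_assoc, Rinv_r by nra. rewrite Rmult_1_r. unfold Rdiv in P2. lra. }
  assert (p*p*(p*p) <= q*q*(p*r)) by (apply Rmult_le_compat; nra).
  assert (0 <= q*q - p*r) by lra.
  set (z := q*q - p*r) in *.
  replace (p*p*p*p*p*p) with ((p*p)*(p*p*(p*p))) by ring.
  apply Rle_trans with (z * ((q*q) * (q*q*(p*r)))).
  { apply Rmult_le_compat_l; [lra|]. apply Rmult_le_compat; nra. }
  replace (z * (q * q * (q * q * (p * r)))) with ((z * (q*q)) * (q*q*(p*r))) by ring.
  apply Rmult_le_compat_r; nra. }
set (W := u0*u0 - um*up).
assert (EW : W = (v0*v0 - vm*vp) + (2*(v0*e0) + e0*e0 - vm*ep - vp*em - em*ep)) by (unfold W, u0, um, up; ring).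
assert (h1 : -D <= v0*e0 <= D) by (apply prod_bound; lra).
assert (h2 : -D <= vm*ep <= D) by (apply prod_bound; lra).
assert (h3 : -D <= vp*em <= D) by (apply prod_bound; lra).
assert (h4 : -(D*D) <= em*ep <= D*D) by (apply prod_bound2; lra).
assert (h5 : 0 <= e0*e0 <= D*D).
{ split. apply Rle_0_sqr. apply prod_bound2; lra. }
assert (DD : D * D <= 0.005 * D) by (apply Rmult_le_compat_r; lra).
assert (p6 : 210820 * (x*x) <= p*p*p*p*p*p).
{ assert (H23 : 47/2 * x <= p*p) by (unfold a in Pp; lra).
  assert (H4 : (47/2 * x) * (47/2 * x) <= p*p*(p*p)) by (apply Rmult_le_compat; lra).
  assert (H6 : 1174 * ((47/2 * x) * (47/2 * x)) <= (p*p)*(p*p*(p*p))) by (apply Rmult_le_compat; lra).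
  replace (p*p*p*p*p*p) with ((p*p)*(p*p*(p*p))) by ring.
  replace ((47/2 * x) * (47/2 * x)) with (2209/4 * (x*x)) in H6 by field.
  lra. }
assert (p5 : 0 < p*p*p*p*p) by (repeat apply Rmult_lt_0_compat; lra).
assert (p6' : 0 < p*p*p*p*p*p) by (repeat apply Rmult_lt_0_compat; lra).
assert (X1 : -(0.01/(x*x)) <= v0*v0 - vm*vp).
{ rewrite EX.
  assert (k*k*(1/(q*q) - 1/(p*r)) >= - (3.66 * (576 / (p*p*p*p*p*p)))).
  { assert (0 <= 576 / (p*p*p*p*p*p)) by (apply Rlt_le, Rdiv_lt_0_compat; lra).
    assert (kk : 0 <= k*k <= 3.66) by (split; [apply Rmult_le_pos; lra| apply Rle_trans with (1.911*1.911); [apply Rmult_le_compat; lra| lra]]).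
    set (s6 := 576 / (p*p*p*p*p*p)) in *. set (t := 1/(q*q) - 1/(p*r)) in *.
    assert (k*k*t >= k*k*(-s6)) by (apply Rle_ge, Rmult_le_compat_l; lra).
    assert (k*k*s6 <= 3.66*s6) by (apply Rmult_le_compat_r; lra).
    lra. }
  assert (3.66 * (576 / (p*p*p*p*p*p)) <= 0.01/(x*x)).
  { replace (3.66 * (576 / (p*p*p*p*p*p))) with ((3.66*576) / (p*p*p*p*p*p)) by (unfold Rdiv; ring).
    apply div_le; try lra. }
  assert (0 <= k * (1/p + 1/r - 2/q)) by (apply Rmult_le_pos; lra).
  lra. }
assert (X2 : v0*v0 - vm*vp <= k * (576 / (p*p*p*p*p))).
{ rewrite EX. assert (k*k*(1/(q*q) - 1/(p*r)) <= 0).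
  { assert (0 <= k*k) by (apply Rmult_le_pos; lra). set (t := 1/(q*q) - 1/(p*r)) in *.
    assert (k*k*t <= k*k*0) by (apply Rmult_le_compat_l; lra). lra. }
  assert (k * (1/p + 1/r - 2/q) <= k * (576 / (p*p*p*p*p))) by (apply Rmult_le_compat_l; lra).
  lra. }
assert (W1 : -(1.4/(x*x)) <= W).
{ assert (4.01 * D <= 1.2/(x*x)).
  { apply Rmult_le_reg_r with (x*x); [lra|]. replace (1.2/(x*x)*(x*x)) with 1.2 by (field; lra). replace (4.01*D*(x*x)) with (4.01*(D*(x*x))) by ring. lra. }
  lra. }
assert (W2 : W <= k * (576 / (p*p*p*p*p)) + 4.01 * D) by lra.
assert (M0' : 0 <= k * (576 / (p*p*p*p*p))).
{ apply Rmult_le_pos; [lra|]. apply Rlt_le, Rdiv_lt_0_compat; lra. }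
assert (LC1' : 1 - um*up/(u0*u0) = W/(u0*u0)) by (unfold W; field; lra).
assert (LC2' : u0*u0/(um*up) - 1 = W/(um*up)) by (unfold W; field; lra).
assert (F1 := frac_lower W (u0*u0) (1.4/(x*x))).
assert (F2 := frac_upper W (um*up) (k * (576 / (p*p*p*p*p)) + 4.01 * D)).
assert (G1 : 0 <= 1.4/(x*x)) by (apply Rlt_le, Rdiv_lt_0_compat; lra).
assert (U1 : 0.88 <= u0*u0) by (apply Rle_trans with (0.94*0.94); [lra| apply Rmult_le_compat; lra]).
assert (U2 : 0.88 <= um*up) by (apply Rle_trans with (0.94*0.94); [lra| apply Rmult_le_compat; lra]).
specialize (F1 U1 W1 G1).
specialize (F2 U2 W2 ltac:(lra)).
assert (K1 : k * (576 / (p*p*p*p*p)) <= 0.88 * (576/(a*a))).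
{ replace (k * (576 / (p*p*p*p*p))) with ((k*576) / (p*p*p*p*p)) by (field; lra).
  replace (0.88 * (576/(a*a))) with ((0.88*576)/(a*a)) by (field; unfold a; lra).
  assert (aa0 : 0 < a*a) by (apply Rmult_lt_0_compat; lra).
  apply div_le; [lra|lra|].
  assert (a <= 1.021 * (p*p)) by lra.
  assert (A4 : a*a <= (1.021 * (p*p))*(1.021 * (p*p))) by (apply Rmult_le_compat; lra).
  assert (P4 : 0 < p*p*(p*p)) by (apply Rmult_lt_0_compat; apply Rmult_lt_0_compat; lra).
  assert (k*(a*a) <= 1.911 * ((1.021 * (p*p))*(1.021 * (p*p)))) by (apply Rmult_le_compat; lra).
  assert (1.911 * ((1.021 * (p*p))*(1.021 * (p*p))) <= 0.88 * (p*p*p*p*p)).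
  { replace (p*p*p*p*p) with (p * (p*p*(p*p))) by ring.
    replace (1.911 * ((1.021 * (p*p))*(1.021 * (p*p)))) with ((1.911*1.021*1.021) * (p*p*(p*p))) by ring.
    assert (34 * (p*p*(p*p)) <= p * (p*p*(p*p))) by (apply Rmult_le_compat_r; lra).
    lra. }
  lra. }
assert (LA1 : 24*PI/(r*r*r) <= PI/6*(2*q-p-r)).
{ replace (24*PI/(r*r*r)) with (PI/6*(144/(r*r*r))) by (field; lra).
  apply Rmult_le_compat_l; lra. }
assert (LA2 : PI/6*(2*q-p-r) <= 24*PI/(p*p*p)).
{ replace (24*PI/(p*p*p)) with (PI/6*(144/(p*p*p))) by (field; lra).
  apply Rmult_le_compat_l; lra. }
rewrite EB1 in LB1. rewrite EB2 in LB2. rewrite LC1' in LC1. rewrite LC2' in LC2.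
replace (3 / x^2) with (3 / (x*x)) by (simpl; field; lra).
set (sx := sqrt x).
assert (Psx : sx * sx = x) by (apply sqrt_sqrt; lra).
assert (sx0 : 0 <= sx) by apply sqrt_pos.
assert (sx1 : 7.07 <= sx) by (apply sq_ge; lra).
assert (psx : 4.846 * sx <= p).
{ apply sq_ge; try lra; replace (4.846*sx*(4.846*sx)) with (4.846*4.846*(sx*sx)) by ring. }
set (s23 := sqrt (2/3)).
assert (Ps23 : s23 * s23 = 2/3) by (apply sqrt_sqrt; lra).
assert (s230 : 0 <= s23) by apply sqrt_pos.
assert (s231 : s23 <= 0.8166) by (apply sq_ge; lra).
assert (Ec : Cconst * sx / 10 = PI * (s23 * sx / 10)) by (unfold Cconst; fold s23; field).
rewrite Ec.
set (c := PI * (s23 * sx / 10)).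
assert (Hyc : 2.3 <= y - c).
{ unfold y, c.
  assert (p / 12 - s23 * sx / 10 >= 0.32 * sx).
  { assert (s23 * sx <= 0.8166 * sx) by (apply Rmult_le_compat_r; lra). lra. }
  replace (PI / 6 * p / 2 - PI * (s23 * sx / 10)) with (PI * (p / 12 - s23 * sx / 10)) by field.
  assert (PI * (0.32 * sx) <= PI * (p / 12 - s23 * sx / 10)) by (apply Rmult_le_compat_l; lra).
  assert (PI * (0.32 * sx) >= 3.14 * (0.32 * 7.07)) by (apply Rle_ge, Rmult_le_compat; lra).
  lra. }
assert (EE : exp (- c) = Ey * exp (y - c)).
{ unfold Ey. rewrite <- exp_plus. f_equal. ring. }
assert (Hyc2 : 3.3 <= exp (y - c)) by (generalize (exp_ineq1_le (y - c)); lra).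
assert (HE : 3.3 * Ey <= exp (- c)) by (rewrite EE, (Rmult_comm Ey); apply Rmult_le_compat_r; lra).
split.
- assert (0 < / (x*x)) by (apply Rinv_0_lt_compat; lra). unfold Rdiv in *. lra.
- unfold D in F2. lra.
Qed.
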